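(* Let $w\geqslant 2$ and $h\geqslant 1$ be integers, let $\underline h=2^{\lfloor\log_2 h\rfloor}$, and let $\mathcal{H}_{h,w}$ be the set of (mostly vertical, inclined to the right) fast Hough transform patterns on the $h\times w$ image. Then $$\mathrm{OR}(\mathcal{H}_{h,w})\geqslant 3\,w\,\underline h\,\log_3\underline h.$$
   Context: Image: for integers $h\geqslant1$ (height) and $w\geqslant2$ (width), an image is the set $I$ of $wh$ pixel variables $p_{ij}$, $i=0,\dots,h-1$ (row index, counted from the bottom), $j=0,\dots,w-1$ (column index). A pattern is a nonempty subset of $I$; a pattern set $\mathcal{T}=\{T_k\}_{k=1}^m$ is a nonempty set of $m$ distinct patterns. Computing $\mathcal{T}$ means computing simultaneously $y_k=\sum_{p\in T_k}p$, $k=1,\dots,m$, where the ''sum'' is a commutative semigroup operation on pixel values. Circuits: a circuit is a directed acyclic graph with $wh$ input nodes $p_{ij}$ of fanin zero and $m$ output nodes $y_k$ of fanout zero; every node of nonzero fanin (a gate) may have any positive number of incoming edges and computes the semigroup sum of the values of its in-neighbours. The size of a circuit is its number of edges. A circuit computes $\mathcal{T}$ if, for every assignment of values to the inputs, output $y_k$ equals $\sum_{p\in T_k}p$ for all $k$. $\mathrm{OR}(\mathcal{T})$ is the minimal size of a circuit computing $\mathcal{T}$ when pixel values lie in $\{0,1\}$ and the operation is logical $\vee$. FHT patterns: for a pattern $T$ containing exactly one pixel in each of its rows, let $\Delta(T)=(j_{top}-j_{bot})\bmod w$, where $j_{top},j_{bot}$ are the column indices of the topmost and bottommost pixels of $T$,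 and let $\mathit{tran}_{a,b}(T)=\{p_{i+a,\,(j+b)\bmod w}\mid p_{ij}\in T\}$. For $h=2^d$ define $\mathcal{H}_0=\{\{p_{00}\},\{p_{01}\},\dots,\{p_{0,w-1}\}\}$ and, for $k=1,\dots,d$, $\mathcal{H}_k=\{T\cup\mathit{tran}_{2^{k-1},\,\Delta(T)+s}(T)\mid T\in\mathcal{H}_{k-1},\ s\in\{0,1\}\}$; set $\mathcal{H}_{h,w}=\mathcal{H}_d$. For arbitrary $h\geqslant1$, let $\overline h=2^{\lceil\log_2h\rceil}$, view the $h\times w$ image $I$ as the bottom $h$ rows of the $\overline h\times w$ image, and set $\mathcal{H}_{h,w}=\{T\cap I\mid T\in\mathcal{H}_{\overline h,w}\}$. *)

(* Defs.v *)
From Stdlib Require Import Reals.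
From mathcomp Require Import all_boot.

Set Implicit Arguments.
Unset Strict Implicit.
Unset Printing Implicit Defensive.

(* Images and pixels: pixel p_{ij} is the pair (i, j), i = row (from   *)
(* the bottom), j = column.                                             *)
Definition pixel (h w : nat) := ('I_h * 'I_w)%type.

Section FHT.
Variables (H w : nat).

Definition pcol (T : {set pixel H w}) (r : nat) : nat :=
  if [pick p in T | nat_of_ord p.1 == r] is Some p then nat_of_ord p.2 else 0.

Definition rtop (T : {set pixel H w}) : nat := \max_(p in T) nat_of_ord p.1.
Definition rbot (T : {set pixel H w}) : nat :=
  \big[minn/H]_(p in T) nat_of_ord p.1.

Definition Delta (T : {set pixel H w}) : nat :=
  (pcol T (rtop T) + w - pcol T (rbot T)) %% w.

Definition tran (a b : nat) (T : {set pixel H w}) : {set pixel H w} :=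
  [set p : pixel H w | [exists q in T,
     (nat_of_ord p.1 == nat_of_ord q.1 + a) &&
     (nat_of_ord p.2 == (nat_of_ord q.2 + b) %% w)]].

Fixpoint Hk (k : nat) : {set {set pixel H w}} :=
  match k with
  | 0 => [set [set p] | p in [set p : pixel H w | nat_of_ord p.1 == 0]]
  | k'.+1 => [set T :|: tran (2 ^ k') (Delta T + nat_of_bool s) T
               | T in Hk k', s in [set: bool]]
  end.
End FHT.

Definition hbar (h : nat) : nat := 2 ^ up_log 2 h.

Definition FHT (h w : nat) : {set {set pixel h w}} :=
  [set [set p : pixel h w | [exists q in T,
          (nat_of_ord q.1 == nat_of_ord p.1) && (nat_of_ord q.2 == nat_of_ord p.2)]]
   | T : {set pixel (hbar h) w} in Hk (hbar h) w (up_log 2 h)].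

(* OR-circuits.  Nodes are the w*h inputs (one per pixel) and n gates   *)
(* 'I_n.  The gates are listed in a topological order: gate g has a     *)
(* nonempty set of in-neighbours, every gate in-neighbour of g has a    *)
(* smaller index (this encodes acyclicity).  Size = number of edges.    *)
Definition node (h w n : nat) := (pixel h w + 'I_n)%type.

Section Circuits.
Variables (h w n : nat).
Variable pr : 'I_n -> {set node h w n}.

Definition well_formed : Prop :=
  forall g : 'I_n, pr g != set0 /\
    (forall g' : 'I_n, inr g' \in pr g -> (nat_of_ord g' < nat_of_ord g)%N).

Fixpoint gval (f : pixel h w -> bool) (k : nat) (g : 'I_n) : bool :=
  match k with
  | 0 => false
  | k'.+1 => [exists x in pr g,
               match x with inl p => f p | inr g' => gval f k' g' end]
  end.

(* depth of any gate is at most n, so fuel n suffices *)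
Definition nval (f : pixel h w -> bool) (x : node h w n) : bool :=
  match x with inl p => f p | inr g => gval f n g end.

Definition csize : nat := \sum_(g < n) #|pr g|.

Definition computes (out : {set pixel h w} -> node h w n)
    (S : {set {set pixel h w}}) : Prop :=
  [/\ well_formed,
      {in S &, injective out},
      (forall T, T \in S -> forall g : 'I_n, out T \notin pr g) &
      (forall (f : pixel h w -> bool) T, T \in S ->
          nval f (out T) = [exists p in T, f p])].
End Circuits.

Definition lower_bound (w hl : nat) : R :=
  Rmult (Rmult (Rmult (INR 3) (INR w)) (INR hl)) (Rdiv (ln (INR hl)) (ln (INR 3))).

(* Main.v *)
Require Import Defs.
From Stdlib Require Import Reals.
From mathcomp Require Import all_boot.
From Stdlib Require Import Lra.
From mathcomp Require Import all_order all_algebra zify.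
Import Order.TTheory GRing.Theory Num.Theory.

Set Implicit Arguments.
Unset Strict Implicit.
Unset Printing Implicit Defensive.


Fixpoint F (k t r : nat) : nat :=
  match k with
  | 0 => 0
  | k'.+1 => if r < 2 ^ k' then F k' t./2 r
             else F k' t./2 (r - 2 ^ k') + F k' t./2 (2 ^ k' - 1) + odd t
  end.

Lemma F0r k t : F k t 0 = 0.
Proof. by elim: k t => [|k IH] t //=; rewrite expn_gt0 /= IH. Qed.

Lemma F_low m k t r : r < 2 ^ k -> F (m + k) t r = F k (t %/ 2 ^ m) r.
Proof.
move=> hr; elim: m t => [|m IH] t; first by rewrite expn0 divn1.
rewrite addSn /=.
have -> : r < 2 ^ (m + k).
  apply: (leq_trans hr); rewrite leq_exp2l //; lia.
by rewrite IH -divn2 -divnMA expnS mulnC.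
Qed.

Lemma half_odd_eq t t' : t./2 = t'./2 -> odd t = odd t' -> t = t'.
Proof. by move=> e1 e2; rewrite -(odd_double_half t) -(odd_double_half t') e1 e2. Qed.

Section Lines.
Variable w : nat.
Hypothesis w2 : 1 < w.
Let w0 : 0 < w. Proof. lia. Qed.

Definition col k (j t r : nat) := (j + F k t r) %% w.

Lemma modD_inj a b m : a < w -> b < w -> (a + m) %% w = (b + m) %% w -> a = b.
Proof. by move=> ha hb /eqP; rewrite eqn_modDr !modn_small // => /eqP. Qed.

Lemma bool_mod_inj (a b : bool) m : (m + a) %% w = (m + b) %% w -> a = b.
Proof.
have ha : (a : nat) < w by case: a; lia.
have hb : (b : nat) < w by case: b; lia.
rewrite ![m + _]addnC => /(modD_inj ha hb).
by case: a {ha}; case: b {hb}.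
Qed.

Lemma col_lo k j t r : r < 2 ^ k -> col k.+1 j t r = col k j t./2 r.
Proof. by move=> hr; rewrite /col /= hr. Qed.

Lemma col_up k j t r : 2 ^ k <= r ->
  col k.+1 j t r = col k ((j + F k t./2 (2 ^ k - 1) + odd t) %% w) t./2 (r - 2 ^ k).
Proof.
move=> hr; rewrite /col /= ltnNge hr /= modnDml; congr (_ %% w); lia.
Qed.

Variables h N : nat.

Definition cont k (l : 'I_w * 'I_N) (p : pixel h w) :=
  (p.1 < 2 ^ k) && (p.2 == col k l.1 l.2 p.1 :> nat).

Lemma lpair_eq (l l' : 'I_w * 'I_N) :
  (l.1 : nat) = l'.1 -> (l.2 : nat) = l'.2 -> l = l'.
Proof. by case: l l' => [a b] [c d] /= /val_inj -> /val_inj ->. Qed.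

Lemma half_ltN (t : 'I_N) : t./2 < N.
Proof. by apply: leq_ltn_trans (ltn_ord t); rewrite -divn2 leq_div. Qed.

Definition lo (l : 'I_w * 'I_N) : 'I_w * 'I_N := (l.1, Ordinal (@half_ltN l.2)).

Definition upc k (l : 'I_w * 'I_N) := (l.1 + F k l.2./2 (2 ^ k - 1) + odd l.2) %% w.
Lemma upc_lt k (l : 'I_w * 'I_N) : upc k l < w. Proof. exact: ltn_pmod. Qed.
Definition up k (l : 'I_w * 'I_N) : 'I_w * 'I_N :=
  (Ordinal (@upc_lt k l), Ordinal (@half_ltN l.2)).

Lemma sh_lt k (p : pixel h w) : p.1 - 2 ^ k < h.
Proof. exact: leq_ltn_trans (leq_subr _ _) (ltn_ord _). Qed.
Definition sh k (p : pixel h w) : pixel h w := (Ordinal (@sh_lt k p), p.2).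

Lemma cont_lo k (l : 'I_w * 'I_N) (p : pixel h w) : p.1 < 2 ^ k -> cont k.+1 l p = cont k (lo l) p.
Proof.
move=> hp; rewrite /cont /= hp col_lo //.
by have -> : p.1 < 2 ^ k.+1 by rewrite expnS; lia.
Qed.

Lemma cont_up k (l : 'I_w * 'I_N) (p : pixel h w) : 2 ^ k <= p.1 -> cont k.+1 l p = cont k (up k l) (sh k p).
Proof.
move=> hp; rewrite /cont /= col_up //.
congr (_ && _); rewrite expnS; apply/idP/idP; lia.
Qed.

Lemma rect k : forall (A : {set pixel h w}) (B : {set 'I_w * 'I_N}),
  {in B, forall l : 'I_w * 'I_N, l.2 < 2 ^ k} ->
  (forall p l, p \in A -> l \in B -> cont k l p) ->
  #|A| * #|B| <= 2 ^ k.
Proof.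
elim: k => [|k IH] A B HB HAB.
  case: (set_0Vmem A) => [->|[p0 p0A]]; first by rewrite cards0.
  have HB1 : #|B| <= 1.
    apply/card_le1_eqP => l l' lB l'B.
    have := HAB _ _ p0A lB; have := HAB _ _ p0A l'B.
    have := HB _ lB; have := HB _ l'B.
    rewrite /cont /col /= !addn0 !modn_small // => h1 h2 /andP[_ /eqP e1] /andP[_ /eqP e2].
    apply: lpair_eq; lia.
  case: (set_0Vmem B) => [->|[l0 l0B]]; first by rewrite cards0 muln0.
  have HA1 : #|A| <= 1.
    apply/card_le1_eqP => p p' pA p'A.
    have := HAB _ _ pA l0B; have := HAB _ _ p'A l0B.
    rewrite /cont /col /= !addn0 !modn_small // => /andP[h1 /eqP e1] /andP[h2 /eqP e2].
    case: p p' {pA p'A} h1 h2 e1 e2 => [a b] [c d] /= h1 h2 e1 e2.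
    congr pair; apply: ord_inj => /=; lia.
  by rewrite expn0; nia.
pose Lo := [set p : pixel h w | p.1 < 2 ^ k].
pose A1 := A :&: Lo; pose A2 := A :\: Lo.
have cardA : #|A| = #|A1| + #|A2| by rewrite cardsID.
have inA1 p : p \in A1 = (p \in A) && (p.1 < 2 ^ k) by rewrite !inE andbC.
have inA2 p : p \in A2 = (p \in A) && (2 ^ k <= p.1) by rewrite !inE andbC -leqNgt.
have HBh l : l \in B -> l.2./2 < 2 ^ k.
  by move=> lB; have := HB _ lB; rewrite ltn_half_double -muln2 expnS mulnC.
have Hlo : forall (A' : {set pixel h w}) (B' : {set 'I_w * 'I_N}),
    A' \subset A1 -> B' \subset B -> {in B' &, injective lo} -> #|A'| * #|B'| <= 2 ^ k.
  move=> A' B' sA sB inj; rewrite -(card_in_imset inj); apply: IH.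
    by move=> _ /imsetP[l lB ->] /=; apply: HBh; apply: (subsetP sB).
  move=> p _ pA /imsetP[l lB ->].
  have := subsetP sA _ pA; rewrite inA1 => /andP[pA0 plt].
  by rewrite -cont_lo //; apply: HAB => //; apply: (subsetP sB).
have Hup : forall (A' : {set pixel h w}) (B' : {set 'I_w * 'I_N}),
    A' \subset A2 -> B' \subset B -> {in B' &, injective (up k)} -> #|A'| * #|B'| <= 2 ^ k.
  move=> A' B' sA sB inj.
  have injs : {in A' &, injective (sh k)}.
    move=> p p' pA p'A e.
    have := subsetP sA _ pA; have := subsetP sA _ p'A; rewrite !inA2.
    move=> /andP[_ h1] /andP[_ h2].
    case: p p' {pA p'A} h1 h2 e => [a b] [c d] /= h1 h2 [e1 e2].
    congr pair; [apply: ord_inj => /=; lia | exact: e2].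
  rewrite -(card_in_imset inj) -(card_in_imset injs); apply: IH.
    by move=> _ /imsetP[l lB ->] /=; apply: HBh; apply: (subsetP sB).
  move=> _ _ /imsetP[p pA ->] /imsetP[l lB ->].
  have := subsetP sA _ pA; rewrite inA2 => /andP[pA0 plt].
  by rewrite -cont_up //; apply: HAB => //; apply: (subsetP sB).
pose Od := [set l : 'I_w * 'I_N | odd l.2].
have cardB : #|B| = #|B :&: Od| + #|B :\: Od| by rewrite cardsID.
have parI : {in B :&: Od &, forall l l' : 'I_w * 'I_N, odd l.2 = odd l'.2} /\
            {in B :\: Od &, forall l l' : 'I_w * 'I_N, odd l.2 = odd l'.2}.
  split=> l l'; rewrite !inE.
    by move=> /andP[_ ->] /andP[_ ->].
  by move=> /andP[/negPf-> _] /andP[/negPf-> _].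
have loinj : forall B' : {set 'I_w * 'I_N},
    {in B' &, forall l l' : 'I_w * 'I_N, odd l.2 = odd l'.2} -> {in B' &, injective lo}.
  move=> B' hB l l' lB l'B e; apply: lpair_eq.
    exact: (congr1 (fun x => nat_of_ord x.1) e).
  apply: half_odd_eq; last exact: hB.
  exact: (congr1 (fun x => nat_of_ord x.2) e).
have upinj : forall B' : {set 'I_w * 'I_N},
    {in B' &, forall l l' : 'I_w * 'I_N, odd l.2 = odd l'.2} -> {in B' &, injective (up k)}.
  move=> B' hB l l' lB l'B e.
  have e2 : l.2./2 = l'.2./2 := (congr1 (fun x => nat_of_ord x.2) e).
  have e3 := hB _ _ lB l'B.
  apply: lpair_eq; last exact: half_odd_eq.
  have e1 := congr1 (fun x => nat_of_ord x.1) e; simpl in e1.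
  move: e1; rewrite /upc e2 e3 -!addnA.
  by apply: modD_inj.
have sBI : B :&: Od \subset B by apply: subsetIl.
have sBD : B :\: Od \subset B by apply: subsetDl.
case: (set_0Vmem A2) => [A2e | [p2 p2A2]].
  have AA1 : A \subset A1.
    apply/subsetP => p pA; rewrite inA1 pA /= ltnNge.
    apply/negP => hp; have : p \in A2 by rewrite inA2 pA.
    by rewrite A2e inE.
  have [P1 P2] := parI.
  have := Hlo _ _ AA1 sBI (loinj _ P1); have := Hlo _ _ AA1 sBD (loinj _ P2).
  rewrite cardB expnS; lia.
case: (set_0Vmem A1) => [A1e | [p1 p1A1]].
  have AA2 : A \subset A2.
    apply/subsetP => p pA; rewrite inA2 pA /= leqNgt.
    apply/negP => hp; have : p \in A1 by rewrite inA1 pA.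
    by rewrite A1e inE.
  have [P1 P2] := parI.
  have := Hup _ _ AA2 sBI (upinj _ P1); have := Hup _ _ AA2 sBD (upinj _ P2).
  rewrite cardB expnS; lia.
have /andP[p1A p1lt] : (p1 \in A) && (p1.1 < 2 ^ k) by rewrite -inA1.
have /andP[p2A p2ge] : (p2 \in A) && (2 ^ k <= p2.1) by rewrite -inA2.
have i1 : {in B &, injective lo}.
  move=> l l' lB l'B e.
  have e1 : (l.1 : nat) = l'.1 := (congr1 (fun x => nat_of_ord x.1) e).
  have e2 : l.2./2 = l'.2./2 := (congr1 (fun x => nat_of_ord x.2) e).
  apply: lpair_eq => //; apply: half_odd_eq => //.
  have := HAB _ _ p2A lB; have := HAB _ _ p2A l'B.
  rewrite !cont_up // /cont /col /= e2 => /andP[_ /eqP c1] /andP[_ /eqP c2].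
  have := modD_inj (@upc_lt k l') (@upc_lt k l) (etrans (esym c1) c2).
  by rewrite /upc e1 e2 => /bool_mod_inj ->.
have i2 : {in B &, injective (up k)}.
  move=> l l' lB l'B e.
  have e2 : l.2./2 = l'.2./2 := (congr1 (fun x => nat_of_ord x.2) e).
  have e1 : (l.1 : nat) = l'.1.
    have := HAB _ _ p1A lB; have := HAB _ _ p1A l'B.
    rewrite !cont_lo // /cont /col /= e2 => /andP[_ /eqP c1] /andP[_ /eqP c2].
    exact: modD_inj (ltn_ord _) (ltn_ord _) (etrans (esym c2) c1).
  apply: lpair_eq => //; apply: half_odd_eq => //.
  have eu := congr1 (fun x => nat_of_ord x.1) e; simpl in eu.
  by move: eu; rewrite /upc e1 e2 => /bool_mod_inj ->.
have := Hlo _ _ (subxx A1) (subxx B) i1; have := Hup _ _ (subxx A2) (subxx B) i2.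
rewrite cardA expnS; lia.
Qed.

End Lines.



Section FHTlines.
Variables (H w : nat).
Hypothesis w2 : 1 < w.

Definition lineset k j t : {set pixel H w} :=
  [set p : pixel H w | (p.1 < 2 ^ k) && (p.2 == col w k j t p.1 :> nat)].

Lemma col_lt k j t r : col w k j t r < w.
Proof. rewrite /col; apply: ltn_pmod; lia. Qed.

Section Fix.
Variables (k j t : nat).
Hypotheses (hj : j < w) (hk : 2 ^ k <= H).
Let T := lineset k j t.

Lemma rtop_line : rtop T = 2 ^ k - 1.
Proof.
have k0 : 0 < 2 ^ k by rewrite expn_gt0.
apply/eqP; rewrite eqn_leq; apply/andP; split.
  by apply/bigmax_leqP => p; rewrite inE => /andP[hp _]; rewrite subn1 -ltnS prednK.
have h1 : 2 ^ k - 1 < H by lia.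
pose p : pixel H w := (Ordinal h1, Ordinal (col_lt k j t (2 ^ k - 1))).
have pT : p \in T by rewrite inE /=; apply/andP; split => //; lia.
by have := @leq_bigmax_cond _ (mem T) (fun q : pixel H w => nat_of_ord q.1) p pT.
Qed.

Lemma bigmin0 (I : eqType) (r : seq I) (P : pred I) (G : I -> nat) x0 m :
  x0 \in r -> P x0 -> G x0 = 0 -> \big[minn/m]_(i <- r | P i) G i = 0.
Proof.
elim: r => [|y r IH] //; rewrite in_cons big_cons => /orP[/eqP <- -> -> | /IH h Px G0].
  by rewrite min0n.
by rewrite h //; case: (P y); rewrite ?minn0.
Qed.

Lemma rbot_line : rbot T = 0.
Proof.
have k0 : 0 < 2 ^ k by rewrite expn_gt0.
have h1 : 0 < H by lia.
pose p : pixel H w := (Ordinal h1, Ordinal (col_lt k j t 0)).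
have pT : p \in T by rewrite inE /=; apply/andP; split => //.
by rewrite /rbot (bigmin0 (x0 := p)) // mem_index_enum.
Qed.

Lemma pcol_line r : r < 2 ^ k -> pcol T r = col w k j t r.
Proof.
move=> hr; rewrite /pcol; case: pickP => [p /andP[] | none].
  by rewrite inE => /andP[_ /eqP ->] /eqP ->.
have h1 : r < H by lia.
pose p : pixel H w := (Ordinal h1, Ordinal (col_lt k j t r)).
have := none p; rewrite inE /= eqxx andbT => /negbT/negP; case.
by apply/andP; split.
Qed.

Lemma Delta_line : Defs.Delta T = F k t (2 ^ k - 1) %% w.
Proof.
have k0 : 0 < 2 ^ k by rewrite expn_gt0.
rewrite /Defs.Delta rtop_line rbot_line !pcol_line; try lia.
rewrite /col F0r addn0 (modn_small hj) -addnBA; last lia.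
rewrite modnDml; have -> : j + F k t (2 ^ k - 1) + (w - j) = F k t (2 ^ k - 1) + w by lia.
by rewrite modnDr.
Qed.

End Fix.

Lemma col_shift k j t r s b : b %% w = F k t (2 ^ k - 1) %% w ->
  (col w k j t r + (b + s)) %% w = col w k ((j + F k t (2 ^ k - 1) + s) %% w) t r.
Proof.
move=> hb; rewrite /col modnDml [b + s]addnC addnA -modnDmr hb modnDmr modnDml.
congr (_ %% w); lia.
Qed.

Lemma lineset_Hk k : forall j t, j < w -> 2 ^ k <= H -> lineset k j t \in Hk H w k.
Proof.
elim: k => [|k IH] j t hj hk.
  have h1 : 0 < H by move: hk; rewrite expn0.
  apply/imsetP; exists (Ordinal h1, Ordinal hj); first by rewrite inE.
  apply/setP => -[a b]; rewrite !inE /col /= addn0 (modn_small hj) xpair_eqE.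
  by rewrite -!val_eqE /= ltnS leqn0.
have hk' : 2 ^ k <= H by apply: leq_trans hk; rewrite leq_exp2l //; lia.
have k0 : 0 < 2 ^ k by rewrite expn_gt0.
apply/imset2P; exists (lineset k j t./2) (odd t); [exact: IH | by rewrite inE |].
apply/setP => p; rewrite !inE.
case: (ltnP p.1 (2 ^ k)) => hp.
  rewrite col_lo // (_ : p.1 < 2 ^ k.+1); last by rewrite expnS; lia.
  rewrite /=.
  case: (p.2 == _ :> nat) => //=; symmetry; apply/negbTE/existsP => -[q /andP[]].
  by rewrite inE => /andP[hq _] /andP[/eqP e _]; move: hp hq e; rewrite /=; lia.
rewrite /=.
rewrite col_up //.
apply/andP/existsP.
  move=> [hp2 /eqP e].
  have h1 : p.1 - 2 ^ k < H by apply: leq_ltn_trans (ltn_ord p.1); lia.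
  pose q : pixel H w := (Ordinal h1, Ordinal (col_lt k j t./2 (p.1 - 2 ^ k))).
  exists q; rewrite inE /= eqxx andbT; apply/andP; split.
    by rewrite expnS in hp2; lia.
  apply/andP; split; first by rewrite subnK.
  rewrite e (Delta_line t./2 hj hk').
  by rewrite col_shift // modn_mod.
move=> [q /andP[]]; rewrite inE => /andP[hq /eqP eq] /andP[/eqP e1 /eqP e2].
split; first by move: hq; rewrite e1 /= expnS; lia.
rewrite e2 eq (Delta_line t./2 hj hk') col_shift ?modn_mod //.
by rewrite e1 addnK.
Qed.

End FHTlines.



Section Pat.
Variables (h w : nat).
Hypotheses (w2 : 1 < w) (h1 : 0 < h).

Definition KK := up_log 2 h.
Definition dl := trunc_log 2 h.
Definition hl := 2 ^ dl.

Lemma hl_le_h : hl <= h. Proof. exact: trunc_logP. Qed.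
Lemma h_le_H : h <= hbar h. Proof. exact: up_logP. Qed.
Lemma dl_le_K : dl <= KK.
Proof.
rewrite -(@leq_exp2l 2) //; apply: leq_trans hl_le_h h_le_H.
Qed.

Definition Sl (l : 'I_w * 'I_hl) : {set pixel h w} :=
  [set p : pixel h w | [exists q in lineset (hbar h) w KK l.1 (l.2 * 2 ^ (KK - dl)),
     (nat_of_ord q.1 == nat_of_ord p.1) && (nat_of_ord q.2 == nat_of_ord p.2)]].

Lemma Sl_FHT l : Sl l \in FHT h w.
Proof.
apply/imsetP; exists (lineset (hbar h) w KK l.1 (l.2 * 2 ^ (KK - dl))) => //.
by apply: lineset_Hk.
Qed.

Lemma col_KD j t r : r < hl -> col w KK j (t * 2 ^ (KK - dl)) r = col w dl j t r.
Proof.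
move=> hr; rewrite /col.
have hK := dl_le_K.
by rewrite -{1}(subnK hK) F_low // mulnK // expn_gt0.
Qed.

Lemma Sl_bot l (p : pixel h w) : p.1 < hl ->
  (p \in Sl l) = (p.2 == col w dl l.1 l.2 p.1 :> nat).
Proof.
move=> hp; rewrite inE; apply/existsP/idP.
  move=> [q /andP[]]; rewrite inE => /andP[_ /eqP e] /andP[/eqP e1 /eqP e2].
  by rewrite -e2 e e1 col_KD.
move=> /eqP e.
have hq : p.1 < hbar h by apply: leq_trans (ltn_ord _) h_le_H.
exists (Ordinal hq, p.2); rewrite inE /= !eqxx !andbT.
rewrite col_KD // -e eqxx andbT.
by apply: leq_trans hq _.
Qed.

Lemma card_line (l : 'I_w * 'I_hl) :
  #|[set p : pixel h w | (p.1 < hl) && (p.2 == col w dl l.1 l.2 p.1 :> nat)]| = hl.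
Proof.
have hh r : (r : 'I_hl) < h by apply: leq_trans (ltn_ord r) hl_le_h.
pose f (r : 'I_hl) : pixel h w := (Ordinal (hh r), Ordinal (col_lt w2 dl l.1 l.2 r)).
have finj : injective f.
  by move=> r r' /(congr1 (fun p : pixel h w => nat_of_ord p.1)) /= /ord_inj.
suff -> : [set p : pixel h w | (p.1 < hl) && (p.2 == col w dl l.1 l.2 p.1 :> nat)]
   = f @: 'I_hl by rewrite card_imset // card_ord.
apply/setP => p; rewrite !inE.
apply/andP/imsetP.
  move=> [hp /eqP e]; exists (Ordinal hp) => //.
  case: p hp e => a b /= hp e; congr pair; apply: ord_inj => //=.
by move=> [r _ ->] /=; split.
Qed.

End Pat.



Section Circ.
Variables (h w n : nat) (pr : 'I_n -> {set node h w n}).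
Hypothesis wf : well_formed pr.

Lemma gval_fuel f : forall k1 k2 (g : 'I_n), g < k1 -> g < k2 ->
  gval pr f k1 g = gval pr f k2 g.
Proof.
elim=> [|k1 IH] [|k2] g // h1 h2 /=.
apply: eq_existsb => -[p|g'] //=.
case E: (inr g' \in pr g) => //=.
have lt := (wf g).2 g' E.
apply: IH; lia.
Qed.

Lemma nval_gate f (g : 'I_n) :
  nval pr f (inr g) = [exists u in pr g, nval pr f u].
Proof.
rewrite /nval (@gval_fuel f n g.+1) //=.
apply: eq_existsb => -[p|g'] //=.
case E: (inr g' \in pr g) => //=.
have lt := (wf g).2 g' E.
by rewrite (@gval_fuel f g n) //; lia.
Qed.

Definition Aset (v : node h w n) : {set pixel h w} :=
  [set p | nval pr (fun q => q == p) v].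

Lemma A_inl p q : (q \in Aset (inl p)) = (p == q).
Proof. by rewrite inE. Qed.

Lemma A_gate g p : (p \in Aset (inr g)) = [exists u in pr g, p \in Aset u].
Proof. by rewrite inE nval_gate; apply: eq_existsb => u; rewrite inE. Qed.

Definition E : rel (node h w n) :=
  fun u v => if v is inr g then u \in pr g else false.

Lemma A_conn u v : connect E u v -> Aset u \subset Aset v.
Proof.
move/connectP => [s pth ->]; elim: s u pth => [|x s IH] u /=; first by rewrite subxx.
move=> /andP[eux pth]; apply: (subset_trans _ (IH _ pth)).
case: x eux {pth IH} => //= g ug; apply/subsetP => p pu.
by rewrite A_gate; apply/existsP; exists u; rewrite ug.
Qed.

Lemma conn_gate s (g : 'I_n) : path E (inr g) s ->
  if last (inr g) s is inr g2 then g <= g2 else false.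
Proof.
elim: s g => [|x s IH] g /=; first by [].
move=> /andP[]; case: x => // g1 gin pth.
have := (wf g1).2 g gin; have := IH g1 pth.
by case: (last _ s) => // g2; lia.
Qed.

Lemma noback g u : u \in pr g -> ~~ connect E (inr g) u.
Proof.
move=> ug; apply/negP => /connectP [s pth eu]; have := conn_gate pth; rewrite -eu.
case: u ug eu => // g' ug _; have := (wf g).2 g' ug; lia.
Qed.

Definition D v x := [set g : 'I_n | connect E (inr g) v && (x \in Aset (inr g))].
Lemma inD v x g : (g \in D v x) = connect E (inr g) v && (x \in Aset (inr g)).
Proof. by rewrite [in LHS]inE. Qed.

Definition Q v x := \prod_(g in D v x) #|pr g|.

Lemma pr_pos g : 0 < #|pr g|.
Proof. by rewrite card_gt0; exact: (wf g).1. Qed.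

Lemma Q_pos v x : 0 < Q v x.
Proof. by apply: prodn_gt0 => g; apply: pr_pos. Qed.

Lemma Q_step g u x : u \in pr g -> x \in Aset u -> #|pr g| * Q u x <= Q (inr g) x.
Proof.
move=> ug xu.
have sub : g |: D u x \subset D (inr g) x.
  apply/subsetP => g'; rewrite in_setU1 !inD => /orP[/eqP -> | /andP[c xa]].
    rewrite connect0 /= A_gate; apply/existsP; exists u; by rewrite ug.
  rewrite xa andbT; apply: connect_trans c _; apply: connect1; exact: ug.
have gnot : g \notin D u x by rewrite inD negb_and noback.
rewrite /Q [X in _ <= X](big_setID (g |: D u x)) /= (setIidPr sub) big_setU1 //=.
by apply: leq_pmulr; apply: prodn_gt0 => g'; apply: pr_pos.
Qed.

Lemma kraft_inl p : (\sum_(x in Aset (inl p)) ((Q (inl p) x)%:R)^-1 <= (1 : rat))%R.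
Proof.
have -> : Aset (inl p) = [set p] by apply/setP => q; rewrite A_inl inE eq_sym.
rewrite big_set1 invf_le1 ?ler1n ?ltr0n; exact: Q_pos.
Qed.

Lemma kraft v : (\sum_(x in Aset v) ((Q v x)%:R)^-1 <= (1 : rat))%R.
Proof.
case: v => [p|g]; first exact: kraft_inl.
suff : forall m (g : 'I_n), g < m ->
    (\sum_(x in Aset (inr g)) ((Q (inr g) x)%:R)^-1 <= (1 : rat))%R by apply.
elim=> [|m IH] {}g // gm.
have ku : forall u, u \in pr g ->
    (\sum_(x in Aset u) ((Q u x)%:R)^-1 <= (1 : rat))%R.
  case=> [p|g'] ug; first exact: kraft_inl.
  apply: IH; have := (wf g).2 g' ug; lia.
pose kR : rat := (#|pr g|)%:R.
have kR0 : (0 < kR)%R by rewrite ltr0n pr_pos.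
pose G u x : rat := if x \in Aset u then (kR^-1 * ((Q u x)%:R)^-1)%R else 0%R.
apply: (@le_trans _ _ (\sum_(x in Aset (inr g)) \sum_(u in pr g) G u x)%R).
  apply: ler_sum => x xg.
  have := xg; rewrite A_gate => /existsP[u /andP[ug xu]].
  rewrite (bigD1 u) //= /G xu.
  apply: (@le_trans _ _ (kR^-1 / (Q u x)%:R)%R).
    rewrite -invfM lef_pV2 ?posrE ?ltr0n ?Q_pos ?mulr_gt0 //.
    by rewrite /kR -natrM ler_nat Q_step.
    by rewrite ltr0n Q_pos.
  rewrite lerDl; apply: sumr_ge0 => u' _; case: ifP => // _.
  by rewrite mulr_ge0 // invr_ge0 ler0n.
rewrite exchange_big /=.
apply: (@le_trans _ _ (\sum_(u in pr g) kR^-1)%R); last first.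
  by rewrite sumr_const -[X in (_ <= X)%R](mulVf (lt0r_neq0 kR0)) -mulr_natr.
apply: ler_sum => u ug.
rewrite (eq_bigr (fun x => if x \in Aset u then (kR^-1 * ((Q u x)%:R)^-1)%R else 0%R)) //.
rewrite -big_mkcondr /=.
have -> : (\sum_(x in Aset (inr g) | x \in Aset u) (kR^-1 * ((Q u x)%:R)^-1))%R =
          (\sum_(x in Aset u) (kR^-1 * ((Q u x)%:R)^-1))%R.
  apply: eq_bigl => x; case xu: (x \in Aset u); rewrite ?andbF ?andbT //.
  by rewrite A_gate; apply/existsP; exists u; rewrite ug.
rewrite -mulr_sumr -[X in (_ <= X)%R]mulr1 ler_wpM2l ?invr_ge0 ?ler0n //.
exact: ku.
Qed.

End Circ.



Lemma k3 k : k ^ 3 <= 3 ^ k.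
Proof.
elim: k => // k IH.
case: (ltnP k 3) => hk; first by case: k hk {IH} => [|[|[|]]].
rewrite [3 ^ _]expnS; apply: leq_trans (leq_mul (leqnn 3) IH).
rewrite !expnS expn0 !muln1; nia.
Qed.

Lemma prodn_expn (I : finType) (A : pred I) (G : I -> nat) m :
  \prod_(i in A) G i ^ m = (\prod_(i in A) G i) ^ m.
Proof.
elim: m => [|m IH]; first by rewrite expn0 big1.
under eq_bigr => i _ do rewrite expnS.
by rewrite big_split /= IH -expnS.
Qed.

Lemma sum_ind2 (I J : finType) (P : {set I}) (P' : {set J}) c :
  \sum_(i : I) \sum_(j : J) (if (i \in P) && (j \in P') then c else 0) = #|P| * #|P'| * c.
Proof.
rewrite (eq_bigr (fun i => if i \in P then #|P'| * c else 0)).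
  by rewrite -big_mkcond sum_nat_const mulnA.
move=> i _; case: (i \in P) => /=; last by rewrite big1.
by rewrite -big_mkcond sum_nat_const.
Qed.

Lemma INR_expn a b : INR (a ^ b) = pow (INR a) b.
Proof. by elim: b => [|b IH] //; rewrite expnS mult_INR IH. Qed.

Section RealPart.
Local Open Scope R_scope.

Lemma ln_le' x y : 0 < x -> x <= y -> ln x <= ln y.
Proof.
move=> x0 /Rle_lt_or_eq [xy|<-]; last exact: Rle_refl.
by apply: Rlt_le; apply: ln_increasing.
Qed.

Lemma final_real (a c w : nat) : (0 < a)%N ->
  (a ^ (3 * a * (w * a)) <= 3 ^ (a * c))%N -> Rle (lower_bound w a) (INR c).
Proof.
move=> a0 H3.
have HR := le_INR _ _ (ssrnat.leP H3).
have aR : 0 < INR a by apply: lt_0_INR; apply/ssrnat.ltP.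
rewrite !INR_expn in HR.
have HR' := ln_le' (pow_lt _ (3 * a * (w * a)) aR) HR.
rewrite !ln_pow // in HR'; last by rewrite /=; lra.
rewrite !mult_INR in HR'.
have l3 : 0 < ln (INR 3).
  by rewrite -ln_1; apply: ln_increasing; rewrite /=; lra.
have L0 : 0 <= ln (INR a).
  rewrite -ln_1; apply: ln_le'; first lra.
  by change 1 with (INR 1); apply: le_INR; apply/ssrnat.leP.
rewrite /lower_bound.
apply: (Rmult_le_reg_r (ln (INR 3))) => //.
have -> : INR 3 * INR w * INR a * (ln (INR a) / ln (INR 3)) * ln (INR 3) =
           INR 3 * INR w * INR a * ln (INR a).
  by field; apply: Rgt_not_eq.
apply: (Rmult_le_reg_l (INR a)) => //.
move: HR'; set L := ln (INR a); set l := ln (INR 3).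
move=> HR'.
have e1 : INR a * (INR 3 * INR w * INR a * L) =
           INR 3 * INR a * (INR w * INR a) * L by ring.
have e2 : INR a * (INR c * l) = INR a * INR c * l by ring.
by rewrite e1 e2.
Qed.

End RealPart.

Theorem theorem2 (h w : nat) :
  (2 <= w)%N -> (1 <= h)%N ->
  forall (n : nat) (pr : 'I_n -> {set node h w n})
         (out : {set pixel h w} -> node h w n),
    computes pr out (FHT h w) ->
    Rle (lower_bound w (2 ^ trunc_log 2 h)) (INR (csize pr)).
Proof.
move=> hw hh n pr out [wf _ _ corr].
change (2 ^ trunc_log 2 h) with (hl h).
pose Y (l : 'I_w * 'I_(hl h)) := out (Sl l).
have AY l : Aset pr (Y l) = Sl l.
  apply/setP => p; rewrite [in LHS]inE corr ?Sl_FHT //.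
  apply/existsP/idP => [[q /andP[qS /eqP <-]]|pS] //.
  by exists p; rewrite pS eqxx.
pose Bot := [set p : pixel h w | p.1 < hl h].
pose X l := Aset pr (Y l) :&: Bot.
have cardX l : #|X l| = hl h.
  apply: (etrans _ (card_line hw hh l)); apply: eq_card => p.
  rewrite in_setI AY [p \in Bot]inE [RHS]inE.
  case: (ltnP p.1 (hl h)) => hp; last by rewrite andbF.
  by rewrite andbT Sl_bot.
pose cost l := \sum_(x in X l) \sum_(g in D pr (Y l) x) #|pr g|.
have hl0 : 0 < hl h by rewrite /hl expn_gt0.
have H1 l : (hl h) ^ (3 * hl h) <= 3 ^ (cost l).
  have kr := kraft wf (Y l).
  have kX : (\sum_(x in X l) ((Q pr (Y l) x)%:R)^-1 <= (1 : rat))%R.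
    apply: le_trans kr.
    rewrite [X in (_ <= X)%R](big_setID Bot) /= lerDl.
    by apply: sumr_ge0 => x _; rewrite invr_ge0 ler0n.
  have nn : {in X l, forall x, (0 <= ((Q pr (Y l) x)%:R)^-1 :> rat)%R}.
    by move=> x _; rewrite invr_ge0 ler0n.
  have AG := (leif_AGM nn).1.
  rewrite cardX in AG.
  have hlR : (0 < (hl h)%:R :> rat)%R by rewrite ltr0n.
  have AG2 : (\prod_(x in X l) ((Q pr (Y l) x)%:R)^-1 <= ((hl h)%:R^-1) ^+ hl h :> rat)%R.
    apply: le_trans AG _.
    apply: lerXn2r.
    - rewrite nnegrE divr_ge0 ?ler0n //; apply: sumr_ge0 => x _.
      by rewrite invr_ge0 ler0n.
    - by rewrite nnegrE invr_ge0 ler0n.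
    by rewrite -[X in (_ <= X)%R]mul1r ler_wpM2r // invr_ge0 ler0n.
  rewrite prodfV -natr_prod exprVn -natrX lef_pV2 ?posrE ?ltr0n ?expn_gt0 ?hl0 // in AG2;
    last by rewrite prodn_gt0 // => x; apply: Q_pos.
  rewrite ler_nat in AG2.
  rewrite /cost expn_sum.
  apply: (@leq_trans ((\prod_(x in X l) Q pr (Y l) x) ^ 3)).
    by rewrite mulnC expnM leq_exp2r.
  rewrite -prodn_expn; apply: leq_prod => x _.
  rewrite expn_sum /Q -prodn_expn; apply: leq_prod => g _; exact: k3.
have H2 : \sum_l cost l <= hl h * csize pr.
  pose Bg (g : 'I_n) := [set l : 'I_w * 'I_(hl h) | connect (E pr) (inr g) (Y l)].
  pose Ag (g : 'I_n) := Aset pr (inr g) :&: Bot.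
  have Rg g : #|Ag g| * #|Bg g| <= hl h.
    apply: (rect hw (k := dl h)).
      by move=> l _; exact: ltn_ord.
    move=> p l; rewrite in_setI [p \in Bot]inE => /andP[pA pB] lB.
    rewrite inE in lB.
    have : p \in Aset pr (Y l) by apply: (subsetP (A_conn wf lB)).
    by rewrite AY Sl_bot // => e; rewrite /cont pB.
  apply: (@leq_trans (\sum_l \sum_(x : pixel h w) \sum_(g : 'I_n)
      (if (l \in Bg g) && (x \in Ag g) then #|pr g| else 0))).
    apply: leq_sum => l _.
    rewrite /cost big_mkcond /=; apply: leq_sum => x _.
    case: ifP => xX //.
    rewrite big_mkcond /=; apply: leq_sum => g _.
    case: ifP => // gD.
    have -> // : (l \in Bg g) && (x \in Ag g).
    move: gD; rewrite inD => /andP[c xa]; move: xX; rewrite in_setI => /andP[_ xb].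
    by rewrite inE c in_setI xa xb.
  rewrite (eq_bigr (fun l => \sum_(g : 'I_n) \sum_(x : pixel h w)
      (if (l \in Bg g) && (x \in Ag g) then #|pr g| else 0))); last first.
    by move=> l _; rewrite exchange_big.
  rewrite exchange_big /= /csize big_distrr /=; apply: leq_sum => g _.
  by rewrite sum_ind2 leq_mul2r mulnC Rg orbT.
have H3 : (hl h) ^ (3 * hl h * (w * hl h)) <= 3 ^ (hl h * csize pr).
  apply: (@leq_trans (3 ^ (\sum_l cost l))); last by rewrite leq_exp2l.
  rewrite expn_sum; apply: (@leq_trans (\prod_(l : 'I_w * 'I_(hl h)) hl h ^ (3 * hl h))).
    by rewrite prod_nat_const card_prod !card_ord -expnM.
  by apply: leq_prod => l _; exact: H1.
apply: final_real => //; rewrite /hl expn_gt0.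
Qed.
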